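(* Let $d$ and $t$ be integers with $d \geq 3t-5$ and $t \geq 4$. Then every edge-coloring of $W_d$ using at least $\left\lfloor \frac{2t-5}{t-2} d \right\rfloor + 1$ colors contains a rainbow subgraph isomorphic to $F_t$; that is, \[ \mathrm{rb}(W_d, F_t) \le \left\lfloor \frac{2t-5}{t-2}\, d \right\rfloor + 1 . \]
   Context: A subgraph of an edge-colored graph is rainbow if no two of its edges have the same color. For graphs $G$ and $H$, the rainbow number $\mathrm{rb}(G,H)$ is the minimum integer $k$ such that every edge-coloring of $G$ that uses at least $k$ distinct colors contains a rainbow subgraph isomorphic to $H$. $W_d$ is the wheel: a hub vertex adjacent to all vertices of a cycle $v_1\cdots v_dv_1$. The fan $F_t$ is obtained from a cycle $v_1v_2\cdots v_tv_1$ by adding all chords $v_1v_i$, $3 \le i \le t-1$. *)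

(* Defs.v *)
From mathcomp Require Import all_boot.
Set Implicit Arguments. Unset Strict Implicit. Unset Printing Implicit Defensive.

(* Wheel W_d: vertex None is the hub, Some i (i : 'I_d) is cycle vertex v_{i+1};
   cycle edges v_i v_{i+1 mod d}; the hub is adjacent to every cycle vertex. *)
Definition wheel_adj (d : nat) : rel (option 'I_d) :=
  fun x y => match x, y with
  | None, None => false
  | None, Some _ | Some _, None => true
  | Some i, Some j => (val j == (val i).+1 %% d) || (val i == (val j).+1 %% d)
  end.

(* Fan F_t on 'I_t (vertex k stands for v_{k+1}): cycle v_1 ... v_t v_1 plus
   chords v_1 v_i (3 <= i <= t-1); i.e. vertex 0 adjacent to all others plus
   the path edges k (k+1) for all k. *)
Definition fan_adj (t : nat) : rel 'I_t :=
  fun i j => (i != j) &&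
    [|| val i == 0, val j == 0, (val i).+1 == val j | (val j).+1 == val i].

(* An edge-coloring of a graph on V assigns a color to each edge, edges being
   represented as 2-element sets {x, y}. *)
Definition colors_used (V : finType) (adj : rel V) (c : {set V} -> nat) : seq nat :=
  undup [seq c [set p.1; p.2] | p <- enum [pred p : V * V | adj p.1 p.2]].

Definition num_colors (V : finType) (adj : rel V) (c : {set V} -> nat) : nat :=
  size (colors_used adj c).

Definition has_rainbow_copy (W V : finType) (hadj : rel W) (adj : rel V)
    (c : {set V} -> nat) : Prop :=
  exists f : W -> V,
    [/\ injective f,
        (forall i j, hadj i j -> adj (f i) (f j)) &
        (forall i j k l, hadj i j -> hadj k l ->
           c [set f i; f j] = c [set f k; f l] -> [set i; j] = [set k; l])].

(* Main.v *)
Require Import Defs.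
From mathcomp Require Import all_boot zify.
Set Implicit Arguments. Unset Strict Implicit. Unset Printing Implicit Defensive.

Section Count.
Variables (d T : nat) (col : nat -> nat).
Hypothesis HT : 2 <= T.
Hypothesis Hd : 3 * T + 1 <= d.
Hypothesis Hper : forall x, col x = col (x %% (2 * d)).
Local Notation N := (2 * d).

Lemma N_gt0 : 0 < N. Proof. lia. Qed.

Lemma colE x y : x = y %[mod N] -> col x = col y.
Proof. by move=> H; rewrite Hper H -Hper. Qed.

Lemma gap_ex p : exists g, (0 < g) && (col (p + g) == col p).
Proof. exists N; rewrite N_gt0 /=; apply/eqP/colE; by rewrite modnDr. Qed.

Definition gap p := ex_minn (gap_ex p).

Lemma gapP p : 0 < gap p /\ col (p + gap p) = col p.
Proof. rewrite /gap; case: ex_minnP => m /andP[m0 /eqP Hm] _; by []. Qed.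

Lemma gap_min p g : 0 < g -> col (p + g) = col p -> gap p <= g.
Proof. move=> g0 Hg; rewrite /gap; case: ex_minnP => m _ Hmin; apply: Hmin; by rewrite g0 Hg eqxx. Qed.

Definition psi g := if g <= 2 * T then (2 * T - g)./2.+1 else 0.

Lemma psi_le g : 0 < g -> psi g <= T.
Proof. rewrite /psi; case: ifP => // _ g0. have := odd_double_half (2 * T - g); rewrite -muln2; case: (odd _) => /=; lia. Qed.

Lemma psi_le2 g : 0 < g -> g <= 2 * T -> 2 * psi g + g <= 2 * T + 2.
Proof. rewrite /psi => g0 H; rewrite H. have := odd_double_half (2 * T - g); rewrite -muln2; case: (odd _) => /=; lia. Qed.

Definition R (i : nat) (p : 'I_N) :=
  [exists j : 'I_(2 * T).+1, (j + gap p <= 2 * T) && ((2 * i + j) %% N == p)].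

Lemma claim1 (Hbad : forall i, i < d -> exists j1 j2,
   [/\ j1 < j2, j2 <= 2 * T & col (2 * i + j1) = col (2 * i + j2)]) :
  d <= \sum_(p < N) \sum_(i < d) R i p.
Proof.
rewrite exchange_big /=.
rewrite -{1}[d]card_ord -sum1_card.
apply: leq_sum => i _.
have [j1 [j2 [lt12 le2 Hc]]] := Hbad _ (ltn_ord i).
have Hp : (2 * i + j1) %% N < N by rewrite ltn_mod N_gt0.
rewrite (bigD1 (Ordinal Hp)) //=.
suff -> : R i (Ordinal Hp) by [].
apply/existsP.
have Hj1 : j1 < (2 * T).+1 by lia.
exists (Ordinal Hj1) => /=; rewrite eqxx andbT.
have : gap ((2 * i + j1) %% N) <= j2 - j1.
  apply: gap_min; first lia.
  rewrite (@colE _ (2 * i + j2)); last first.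
    rewrite modnDml -addnA subnKC //; lia.
  by rewrite -Hc; apply: colE; rewrite modn_mod.
lia.
Qed.

Lemma odd_modN x : odd (x %% N) = odd x.
Proof. apply: odd_mod; by rewrite oddM. Qed.

Lemma claim2 (p : 'I_N) : \sum_(i < d) R i p <= psi (gap p).
Proof.
rewrite /psi; case: ifP => Hg; last first.
  rewrite leqn0 sum_nat_eq0; apply/forallP => i; apply/implyP => _.
  rewrite eqb0; apply/existsP => -[j /andP[Hj _]]; move/negbT: Hg; lia.
set M := (2 * T - gap p)./2.
have -> : \sum_(i < d) R i p = #|[set i : 'I_d | R i p]|.
  rewrite -sum1_card [in RHS]big_mkcond /=; apply: eq_bigr => i _; rewrite inE; by case: (R i p).
pose J (i : nat) := (p + N - 2 * i) %% N.
have HJ : forall i : 'I_d, R i p -> exists j : 'I_(2 * T).+1,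
    [/\ J i = j, j + gap p <= 2 * T, odd j = odd p & (2 * i + j) %% N = p].
  move=> i /existsP[j /andP[Hj /eqP Hp]]; exists j; split => //.
    have Hi := ltn_ord i.
    rewrite /J -Hp -addnBA; last lia.
    rewrite modnDml (addnC (2 * i)) -addnA subnKC; last lia.
    rewrite modnDr modn_small //; have := ltn_ord j; lia.
  by rewrite -Hp odd_modN oddD oddM.
pose f (i : 'I_d) : 'I_M.+1 := inord (J i)./2.
have fK : forall i : 'I_d, R i p -> val (f i) = (J i)./2.
  move=> i /HJ[j [E Hj _ _]]; rewrite /f E /= inordK // ltnS /M.
  by apply: half_leq; lia.
rewrite -(@card_in_imset _ _ f); last first.
  move=> i1 i2; rewrite !inE => H1 H2 Hf.
  have := fK _ H1; have := fK _ H2; rewrite Hf => ->.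
  case/HJ: H1 => j1 [E1 _ O1 P1]; case/HJ: H2 => j2 [E2 _ O2 P2].
  rewrite E1 E2 => Eh.
  have Ej : (j1 : nat) = j2.
    by rewrite -(odd_double_half j1) -(odd_double_half j2) O1 O2 Eh.
  move: P1 P2; rewrite Ej => P1; rewrite -{}P1 => /eqP.
  rewrite eqn_modDr !modn_small; try (have := ltn_ord i1; have := ltn_ord i2; lia).
  move=> /eqP H; apply: val_inj => /=; lia.
by apply: (leq_trans (max_card _)); rewrite card_ord.
Qed.

Lemma cover_one a (p0 : 'I_N) (Ha : col p0 = a) (q : 'I_N) :
  exists2 p : 'I_N, col p == a & [exists e : 'I_(gap p), (p + e) %% N == q].
Proof.
have Hq := ltn_ord q; have Hp0 := ltn_ord p0.
have Hex : exists dl, (dl <= q + N) && (col (q + N - dl) == a).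
  case: (leqP p0 q) => H.
    exists (q - p0); apply/andP; split; first lia.
    rewrite -Ha; apply/eqP/colE.
    have -> : q + N - (q - p0) = p0 + N by lia.
    by rewrite modnDr.
  exists (q + N - p0); apply/andP; split; first lia.
  rewrite -Ha; apply/eqP; congr col; lia.
case: (ex_minnP Hex) => dl /andP[Hdl /eqP Hcol] Hmin.
have Hpr : (q + N - dl) %% N < N by rewrite ltn_mod N_gt0.
set pr := Ordinal Hpr.
have Hcpr : col pr = a by rewrite -Hcol /=; apply: colE; rewrite modn_mod.
exists pr; first by rewrite Hcpr.
have Hlt : dl < gap pr.
  rewrite ltnNge; apply/negP => Hle.
  have [g0 Hg] := gapP pr.
  have : dl <= dl - gap pr.
    apply: Hmin; apply/andP; split; first lia.
    have -> : q + N - (dl - gap pr) = (q + N - dl) + gap pr by lia.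
    rewrite -Hcpr -Hg; apply/eqP/colE => /=; by rewrite modnDml.
  lia.
apply/existsP; exists (Ordinal Hlt) => /=.
rewrite modnDml subnK // modnDr modn_small //.
Qed.

Lemma covering a (p0 : 'I_N) (Ha : col p0 = a) :
  N <= \sum_(p < N | col p == a) gap p.
Proof.
apply: (@leq_trans (\sum_(q < N) 1)); first by rewrite sum1_card card_ord.
apply: (@leq_trans (\sum_(q < N) \sum_(p < N | col p == a)
                 [exists e : 'I_(gap p), (p + e) %% N == q])).
  apply: leq_sum => q _.
  have [p Hp He] := cover_one Ha q.
  by rewrite (bigD1 p) //= He.
rewrite exchange_big /=; apply: leq_sum => p _.
pose g (e : 'I_(gap p)) : 'I_N := Ordinal (ltn_pmod (p + e) N_gt0).
apply: (@leq_trans #|g @: 'I_(gap p)|); last first.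
  by apply: (leq_trans (leq_imset_card _ _)); rewrite card_ord.
rewrite -sum1_card [X in _ <= X]big_mkcond /=.
apply: leq_sum => q _.
case: existsP => // -[e /eqP He]; rewrite ifT //.
apply/imsetP; exists e => //; apply: val_inj => /=; by rewrite He.
Qed.

Definition m a := \sum_(p < N | col p == a) 1.

Lemma sumc a c : \sum_(p < N | col p == a) c = m a * c.
Proof. rewrite /m big_distrl /=; apply: eq_bigr => p _; by rewrite mul1n. Qed.

Lemma class_bound a (p0 : 'I_N) : col p0 = a -> m a <= d - T ->
  \sum_(p < N | col p == a) psi (gap p) <= (m a - 1) * T.
Proof.
move=> Ha Hm.
have Hm1 : 1 <= m a by rewrite /m (bigD1 p0) ?Ha //=.
case: (boolP [exists p : 'I_N, (col p == a) && (2 * T < gap p)]).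
  case/existsP => p1 /andP[Hc Hg].
  have : \sum_(p < N | col p == a) psi (gap p) + T <= m a * T.
    rewrite -sumc (bigD1 p1) //= [X in _ <= X](bigD1 p1) //=.
    rewrite {1}/psi ifF; last by apply/negbTE; rewrite -ltnNge.
    rewrite add0n addnC leq_add2l; apply: leq_sum => p _.
    apply: psi_le; exact: (proj1 (gapP p)).
  rewrite mulnBl mul1n; lia.
move/existsPn => Hall.
have H2 : \sum_(p < N | col p == a) (2 * psi (gap p) + gap p)
          <= \sum_(p < N | col p == a) (2 * T + 2).
  apply: leq_sum => p Hp; apply: psi_le2; first exact: (proj1 (gapP p)).
  by move: (Hall p); rewrite Hp /= -leqNgt.
rewrite big_split /= -big_distrr /= sumc in H2.
have Hc := covering Ha.
move: H2 Hc Hm Hm1; set S := \sum_(_ < _ | _) psi _; set G := \sum_(_ < _ | _) gap _.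
rewrite mulnBl mul1n; nia.
Qed.

Definition U := undup (map (fun p : 'I_N => col p) (enum 'I_N)).

Lemma memU (p : 'I_N) : col p \in U.
Proof. by rewrite mem_undup; apply: map_f; rewrite mem_enum. Qed.

Lemma partition F : \sum_(p < N) F p = \sum_(a <- U) \sum_(p < N | col p == a) F p.
Proof.
symmetry.
under eq_bigr => a _ do rewrite big_mkcond /=.
rewrite exchange_big /=; apply: eq_bigr => p _.
rewrite -big_mkcond /= -big_filter.
have -> : [seq a <- U | col p == a] = [:: col p].
  rewrite -(filter_pred1_uniq (undup_uniq _) (memU p)).
  by apply: eq_filter => a; rewrite /= eq_sym.
by rewrite big_seq1.
Qed.

Lemma count_main (Hbad : forall i, i < d -> exists j1 j2,
   [/\ j1 < j2, j2 <= 2 * T & col (2 * i + j1) = col (2 * i + j2)]) :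
  d <= (N - size U) * T.
Proof.
have Hm1 : forall a, a \in U -> 1 <= m a.
  move=> a; rewrite mem_undup => /mapP[p _ ->]; by rewrite /m (bigD1 p) //=.
have HS : \sum_(a <- U) (m a - 1) + size U = N.
  rewrite -sum1_size -big_split /= big_seq.
  rewrite (eq_bigr m); last by move=> a aU; rewrite subnK // Hm1.
  rewrite -big_seq /m -partition; by rewrite sum1_card card_ord.
case: (boolP (has (fun a => d - T < m a) U)).
  case/hasP => a aU Ha.
  have : m a - 1 <= \sum_(a <- U) (m a - 1).
    by rewrite (bigD1_seq a) //= ?undup_uniq // leq_addr.
  move: HS; set S := \sum_(_ <- _) _ => HS HaS.
  have -> : N - size U = S by lia.
  nia.
move/hasPn => Hsmall.
apply: leq_trans (claim1 Hbad) _.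
apply: (@leq_trans (\sum_(p < N) psi (gap p))); first by apply: leq_sum => p _; exact: claim2.
rewrite partition.
apply: (@leq_trans (\sum_(a <- U) (m a - 1) * T)).
  rewrite big_seq [X in _ <= X]big_seq; apply: leq_sum => a aU.
  have := Hsmall a aU; rewrite /= -leqNgt => Ha.
  move: aU; rewrite mem_undup => /mapP[p _ Ep].
  exact: (class_bound (esym Ep) Ha).
rewrite -big_distrl /=.
move: HS; set S := \sum_(_ <- _) _ => HS.
have -> : N - size U = S by lia.
by [].
Qed.
End Count.

Section Graph.
Variables (d' t : nat) (c : {set option 'I_d'.+1} -> nat).
Local Notation d := d'.+1.

Definition pedge (p : nat) : {set option 'I_d} :=
  if odd p then [set Some (inord (p./2 %% d)); Some (inord ((p./2).+1 %% d))]
  else [set None; Some (inord (p./2 %% d))].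
Definition wcol p := c (pedge p).

Lemma half2 x : (2 * x)./2 = x.
Proof. by rewrite mul2n doubleK. Qed.
Lemma half21 x : (2 * x + 1)./2 = x.
Proof. by rewrite addnC mul2n (half_bit_double x true). Qed.

Lemma pedgeMD q r : pedge (q * (2 * d) + r) = pedge r.
Proof.
have Hh : (q * (2 * d) + r)./2 = q * d + r./2.
  rewrite -!divn2 divnDl; last by rewrite dvdn_mull // dvdn_mulr.
  by rewrite mulnCA mulKn.
by rewrite /pedge oddD !oddM /= andbF /= Hh -addnS !modnMDl.
Qed.

Lemma wcol_per x : wcol x = wcol (x %% (2 * d)).
Proof. by rewrite /wcol {1}(divn_eq x (2 * d)) pedgeMD. Qed.

Lemma pedge_spoke (j : 'I_d) : pedge (2 * j) = [set None; Some j].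
Proof.
rewrite /pedge oddM /= half2 modn_small //; congr [set _; Some _].
by apply: val_inj; rewrite /= inordK.
Qed.

Lemma pedge_rim (j : nat) : pedge (2 * j + 1) =
  [set Some (inord (j %% d)); Some (inord (j.+1 %% d))].
Proof. by rewrite /pedge oddD oddM /= half21. Qed.

Lemma num_le : num_colors (@wheel_adj d) c <= size (U d wcol).
Proof.
rewrite /num_colors /colors_used.
apply: uniq_leq_size; first exact: undup_uniq.
move=> x; rewrite mem_undup => /mapP[[u v] /=]; rewrite mem_enum /= => Huv ->.
have Hsp : forall j : 'I_d, c [set None; Some j] \in U d wcol.
  move=> j; have Hj : 2 * j < 2 * d by rewrite ltn_pmul2l.
  have := @memU d wcol (Ordinal Hj); by rewrite /wcol /= pedge_spoke.
have Hrim : forall j k : 'I_d, val k = (val j).+1 %% d ->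
    c [set Some j; Some k] \in U d wcol.
  move=> j k Hk; have Hj : 2 * j + 1 < 2 * d by have := ltn_ord j; lia.
  have := @memU d wcol (Ordinal Hj); rewrite /wcol /= pedge_rim.
  rewrite modn_small //.
  have -> : inord j = j by apply: val_inj; rewrite /= inordK.
  by have -> : inord (j.+1 %% d) = k by apply: val_inj; rewrite /= inordK ?Hk ?ltn_pmod.
case: u v Huv => [j|] [k|] //= Huv.
- case/orP: Huv => /eqP Hk; first exact: Hrim.
  rewrite setUC; exact: Hrim.
- by rewrite setUC.
Qed.

Lemma pedge_even x : pedge (2 * x) = [set None; Some (inord (x %% d))].
Proof. by rewrite /pedge oddM /= half2. Qed.

Lemma fan_adjE (k l : 'I_t) : fan_adj k l =
  (nat_of_ord k != nat_of_ord l) && [|| nat_of_ord k == 0, nat_of_ord l == 0, (nat_of_ord k).+1 == nat_of_ord l | (nat_of_ord l).+1 == nat_of_ord k].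
Proof. by []. Qed.

Lemma set2_eq (k l k' l' : 'I_t) :
  (nat_of_ord k = nat_of_ord k' /\ nat_of_ord l = nat_of_ord l') \/ (nat_of_ord k = nat_of_ord l' /\ nat_of_ord l = nat_of_ord k') ->
  [set k; l] = [set k'; l'].
Proof. case=> [[/val_inj-> /val_inj->]|[/val_inj-> /val_inj->]] //; exact: setUC. Qed.

Lemma window_good (i : nat) (Ht : 4 <= t) (Htd : t <= d) :
  (forall j1 j2, j1 <= 2 * (t - 2) -> j2 <= 2 * (t - 2) ->
     wcol (2 * i + j1) = wcol (2 * i + j2) -> j1 = j2) ->
  has_rainbow_copy (@fan_adj t) (@wheel_adj d) c.
Proof.
move=> Hrb.
pose f (k : 'I_t) : option 'I_d :=
  if nat_of_ord k == 0 then None else Some (inord ((i + k - 1) %% d)).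
pose e (k l : 'I_t) : nat := if nat_of_ord k == 0 then 2 * (l - 1)
  else if nat_of_ord l == 0 then 2 * (k - 1) else 2 * (minn k l - 1) + 1.
have Hedge : forall k l, fan_adj k l ->
    c [set f k; f l] = wcol (2 * i + e k l) /\ e k l <= 2 * (t - 2).
  move=> k l; rewrite fan_adjE => H; have Hk := ltn_ord k; have Hl := ltn_ord l.
  rewrite /f /e /wcol.
  case: (nat_of_ord k =P 0) => Hk0.
    have Hl0 : (nat_of_ord l == 0) = false by apply/eqP; lia.
    rewrite Hl0; split; last lia.
    have -> : 2 * i + 2 * (l - 1) = 2 * (i + l - 1) by lia.
    by rewrite pedge_even.
  case: (nat_of_ord l =P 0) => Hl0.
    split; last lia.
    have -> : 2 * i + 2 * (k - 1) = 2 * (i + k - 1) by lia.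
    by rewrite pedge_even setUC.
  split; last lia.
  have [Hkl|Hlk] : (nat_of_ord k).+1 = nat_of_ord l \/ (nat_of_ord l).+1 = nat_of_ord k by lia.
    have -> : minn k l = k by lia.
    have -> : 2 * i + (2 * (k - 1) + 1) = 2 * (i + k - 1) + 1 by lia.
    rewrite pedge_rim; have -> : i + l - 1 = (i + k - 1).+1 by lia.
    by [].
  have -> : minn k l = l by lia.
  have -> : 2 * i + (2 * (l - 1) + 1) = 2 * (i + l - 1) + 1 by lia.
  rewrite pedge_rim; have -> : i + k - 1 = (i + l - 1).+1 by lia.
  by rewrite setUC.
exists f; split.
- move=> k1 k2; rewrite /f.
  have Hk1 := ltn_ord k1; have Hk2 := ltn_ord k2.
  case: (nat_of_ord k1 =P 0) => H1; case: (nat_of_ord k2 =P 0) => H2 //.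
  + move=> _; apply: val_inj => /=; lia.
  + case=> /(congr1 val); rewrite /= !inordK ?ltn_pmod //.
    have -> : i + k1 - 1 = i + (k1 - 1) by lia.
    have -> : i + k2 - 1 = i + (k2 - 1) by lia.
    move/eqP; rewrite eqn_modDl !modn_small; try lia.
    move/eqP => E; apply: val_inj => /=; lia.
- move=> k l; rewrite fan_adjE /f => H; have Hk := ltn_ord k; have Hl := ltn_ord l.
  case: (nat_of_ord k =P 0) => Hk0.
    have Hl0 : (nat_of_ord l == 0) = false by apply/eqP; lia.
    by rewrite Hl0.
  case: (nat_of_ord l =P 0) => Hl0 //=.
  rewrite !inordK ?ltn_pmod //.
  have [Hkl|Hlk] : (nat_of_ord k).+1 = nat_of_ord l \/ (nat_of_ord l).+1 = nat_of_ord k by lia.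
    apply/orP; left; rewrite -[((i + k - 1) %% d).+1]addn1 modnDml addn1.
    have -> : i + l - 1 = (i + k - 1).+1 by lia.
    by [].
  apply/orP; right; rewrite -[((i + l - 1) %% d).+1]addn1 modnDml addn1.
  have -> : i + k - 1 = (i + l - 1).+1 by lia.
  by [].
- move=> k l k' l' H1 H2 Hc.
  have [E1 B1] := Hedge _ _ H1; have [E2 B2] := Hedge _ _ H2.
  have Ee := Hrb _ _ B1 B2 (etrans (esym E1) (etrans Hc E2)).
  apply: set2_eq.
  move: Ee H1 H2; rewrite /e !fan_adjE.
  case: (nat_of_ord k =P 0); case: (nat_of_ord l =P 0); case: (nat_of_ord k' =P 0); case: (nat_of_ord l' =P 0);
    move=> *; lia.
Qed.

End Graph.

Unset Implicit Arguments.

Theorem theorem3p1 (d t : nat) :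
  4 <= t -> 3 * t - 5 <= d ->
  forall c : {set option 'I_d} -> nat,
    ((2 * t - 5) * d) %/ (t - 2) + 1 <= num_colors (@wheel_adj d) c ->
    has_rainbow_copy (@fan_adj t) (@wheel_adj d) c.
Proof.
move=> Ht; case: d => [|d'] Hd c Hk; first lia.
case: (boolP [exists i : 'I_d'.+1, [forall j1 : 'I_(2 * (t - 2)).+1,
   forall j2 : 'I_(2 * (t - 2)).+1,
   (wcol c (2 * i + j1) == wcol c (2 * i + j2)) ==> (j1 == j2)]]).
  case/existsP => i /forallP H.
  apply: (@window_good _ _ _ i) => //; first lia.
  move=> j1 j2 h1 h2 E.
  have h1' : j1 < (2 * (t - 2)).+1 by [].
  have h2' : j2 < (2 * (t - 2)).+1 by [].
  move: (H (Ordinal h1')) => /forallP /(_ (Ordinal h2')) /implyP /=.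
  by rewrite E eqxx => /(_ isT) /eqP [].
move=> /existsPn Hn.
have Hbad : forall i, i < d'.+1 -> exists j1 j2,
    [/\ j1 < j2, j2 <= 2 * (t - 2) & wcol c (2 * i + j1) = wcol c (2 * i + j2)].
  move=> i Hi; move: (Hn (Ordinal Hi)) => /forallPn[j1 /forallPn[j2]].
  rewrite negb_imply => /andP[/eqP E Hne].
  have Hj1 := ltn_ord j1; have Hj2 := ltn_ord j2.
  case: (ltngtP j1 j2) => H.
  - by exists j1, j2; split => //; lia.
  - by exists j2, j1; split => //; lia.
  - by move: Hne; rewrite (val_inj H) eqxx.
have HT : 1 < t - 2 by lia.
have Hd' : 3 * (t - 2) + 1 <= d'.+1 by lia.
have Hc := count_main HT Hd' (@wcol_per d' c) Hbad.
have Hsz : size (U d'.+1 (wcol c)) <= 2 * d'.+1.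
  by rewrite /U (leq_trans (size_undup _)) // size_map size_enum_ord.
have Hnum := num_le c.
move: Hk; set K := size (U d'.+1 (wcol c)) in Hc Hsz Hnum *.
set q := _ %/ _ => Hk.
have : K <= q.
  rewrite /q leq_divRL; last lia.
  move: Hc Hsz; set D := d'.+1; set T := t - 2.
  have -> : 2 * t - 5 = 2 * T - 1 by lia.
  rewrite !mulnBl mul1n -!mulnA (mulnC T D) => Hc' Hsz'.
  have : K * T <= 2 * (D * T) by rewrite mulnA leq_mul2r Hsz' orbT.
  lia.
lia.
Qed.
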